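(* Under Assumptions A1–A3 (see context), with $\tilde{\bar\theta}_k=\theta-\bar\theta_k$, for every $k\ge0$: $$|\bar\psi_k|\ge\bar\beta_k|\phi_k^{\mathrm T}\tilde{\bar\theta}_k|\quad\text{and}\quad \phi_k^{\mathrm T}\tilde{\bar\theta}_k\,\bar\psi_k\ge0,$$ where $$\bar\psi_k=\mathbb E_k\{\operatorname{sgn}[y_{k+1}-S_k(\phi_k^{\mathrm T}\bar\theta_k)]\}+F_{k+1}(u_k-\phi_k^{\mathrm T}\bar\theta_k)\mathrm I_{[S_k(\phi_k^{\mathrm T}\bar\theta_k)=U_k]}-[1-F_{k+1}(l_k-\phi_k^{\mathrm T}\bar\theta_k)]\mathrm I_{[S_k(\phi_k^{\mathrm T}\bar\theta_k)=L_k]}.$$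
   Context: Setting. Let $\{\mathcal F_k\}_{k\ge0}$ be a nondecreasing sequence of $\sigma$-algebras and write $\mathbb E_k[\cdot]=\mathbb E[\cdot\mid\mathcal F_k]$. Observations follow the saturated model $y_{k+1}=S_k(\phi_k^{\mathrm T}\theta+\varepsilon_{k+1})$, $k=0,1,2,\dots$, where $\phi_k\in\mathbb R^d$ is $\mathcal F_k$-measurable, $\theta\in\mathbb R^d$ is unknown, $\varepsilon_{k+1}\in\mathbb R$ is noise ($\mathcal F_{k+1}$-measurable), and $S_k(x)=L_k$ if $x<l_k$, $S_k(x)=x$ if $l_k\le x\le u_k$, $S_k(x)=U_k$ if $x>u_k$. Assumption A1: $\{\phi_k\}$ is bounded in $k$, and $\theta$ is an interior point of a known convex compact set $D\subseteq\mathbb R^d$. Let $\{C_k\}$ be a bounded $\mathcal F_k$-adapted sequence with $\sup_{x\in D}|\phi_k^{\mathrm T}x|\le C_k$. Assumption A2: $l_k,u_k,L_k,U_k$ are known $\mathcal F_k$-measurable random variables with $L_k\le l_k\le u_k\le U_k$ a.s.; there is a constant $M$ with $\sup_{k\ge0}\max\{l_k,-u_k\}\le M<\infty$ a.s.; and $L_k=l_k=u_k=U_k$ does not hold a.s. The weights $b_k$ are known, $\mathcal F_k$-measurable, with $0<\inf_k b_k\le\sup_k b_k\le 1$. Assumption A3: the conditional distribution function $F_{k+1}$ of $\varepsilon_{k+1}$ given $\mathcal F_k$ satisfies $F_{k+1}(0)=1/2$; its conditional density $f_{k+1}$ is continuous and known; and there is a constant $C\ge\sup_k C_k$ with $0<\inf_{|x|\le\max\{2C,C+M\},k\ge0}f_{k+1}(x)\le\sup_{|x|\le\max\{2C,C+M\},k\ge0}f_{k+1}(x)<\infty$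 a.s. Projection: for positive definite $Q$, $\|x\|_Q^2=x^{\mathrm T}Qx$ and $\Pi_Q(x)=\arg\min_{y\in D}\|x-y\|_Q$. TSWLAD algorithm. Step 1: with $\bar\theta_0\in D$, $\bar P_0>0$, and an $\mathcal F_k$-adapted sequence $\bar\mu_k$ with $0<\inf\bar\mu_k\le\sup\bar\mu_k<\infty$, for $k\ge0$: $\bar\theta_{k+1}=\Pi_{\bar P_{k+1}^{-1}}\{\bar\theta_k+\bar a_k b_k\bar P_k\phi_k\bar v_{k+1}\}$, $\bar v_{k+1}=\operatorname{sgn}[y_{k+1}-S_k(\phi_k^{\mathrm T}\bar\theta_k)]+F_{k+1}(u_k-\phi_k^{\mathrm T}\bar\theta_k)\mathrm I_{[S_k(\phi_k^{\mathrm T}\bar\theta_k)=U_k]}-[1-F_{k+1}(l_k-\phi_k^{\mathrm T}\bar\theta_k)]\mathrm I_{[S_k(\phi_k^{\mathrm T}\bar\theta_k)=L_k]}$, $\bar P_{k+1}=\bar P_k-\bar a_k\bar\beta_k b_k^2\bar P_k\phi_k\phi_k^{\mathrm T}\bar P_k$, $\bar a_k=1/(\bar\mu_k+\bar\beta_k b_k^2\phi_k^{\mathrm T}\bar P_k\phi_k)$, $\bar\beta_k=\inf_{|x|\le\max\{2C_k,C_k+l_k,C_k-u_k\}}f_{k+1}(x)$. Step 2: with $\theta_0\in D$, $P_0>0$, and $\mu_k$ with $0<\inf\mu_k\le\sup\mu_k<\infty$, for $k\ge0$, letting $d_k=\phi_k^{\mathrm T}(\bar\theta_k-\theta_k)$: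 $\theta_{k+1}=\Pi_{P_{k+1}^{-1}}\{\theta_k+a_kb_kP_k\phi_kv_{k+1}\}$, $v_{k+1}=\operatorname{sgn}[y_{k+1}-S_k(\phi_k^{\mathrm T}\theta_k)]+F_{k+1}(u_k-\phi_k^{\mathrm T}\theta_k)\mathrm I_{[S_k(\phi_k^{\mathrm T}\theta_k)=U_k]}-[1-F_{k+1}(l_k-\phi_k^{\mathrm T}\theta_k)]\mathrm I_{[S_k(\phi_k^{\mathrm T}\theta_k)=L_k]}$, $P_{k+1}=P_k-a_k\beta_kb_k^2P_k\phi_k\phi_k^{\mathrm T}P_k$, $a_k=1/(\mu_k+\beta_kb_k^2\phi_k^{\mathrm T}P_k\phi_k)$, and $\beta_k=\frac{F_{k+1}(l_k-\phi_k^{\mathrm T}\theta_k)-F_{k+1}(l_k-\phi_k^{\mathrm T}\bar\theta_k)}{d_k}\mathrm I_{[d_k\ne0]}+f_{k+1}(l_k-\phi_k^{\mathrm T}\theta_k)\mathrm I_{[d_k=0]}$ if $S_k(\phi_k^{\mathrm T}\theta_k)=L_k$; $\beta_k=\frac{1-2F_{k+1}(\phi_k^{\mathrm T}\theta_k-\phi_k^{\mathrm T}\bar\theta_k)}{d_k}\mathrm I_{[d_k\ne0]}+2f_{k+1}(0)\mathrm I_{[d_k=0]}$ if $L_k<S_k(\phi_k^{\mathrm T}\theta_k)<U_k$; $\beta_k=\frac{F_{k+1}(u_k-\phi_k^{\mathrm T}\theta_k)-F_{k+1}(u_k-\phi_k^{\mathrm T}\bar\theta_k)}{d_k}\mathrm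 I_{[d_k\ne0]}+f_{k+1}(u_k-\phi_k^{\mathrm T}\theta_k)\mathrm I_{[d_k=0]}$ if $S_k(\phi_k^{\mathrm T}\theta_k)=U_k$. Here $\operatorname{sgn}$ is the sign function and $\mathrm I_{[\cdot]}$ the indicator. *)

(* Defs.v *)
From HB Require Import structures.
From mathcomp Require Import all_boot all_order all_algebra.
From mathcomp Require Import all_classical all_reals all_analysis.
Set Implicit Arguments. Unset Strict Implicit. Unset Printing Implicit Defensive.
Import Order.TTheory GRing.Theory Num.Theory.
Import numFieldNormedType.Exports.
Local Open Scope classical_set_scope.
Local Open Scope ring_scope.

Definition sat {R : realType} (L l u U x : R) : R :=
  if x < l then L else if u < x then U else x.

Definition dotp {R : realType} (d : nat) (phi x : 'cV[R]_d) : R :=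
  (phi^T *m x) 0 0.

Definition ind {R : realType} (b : bool) : R := if b then 1 else 0.

Definition convex_vset {R : realType} (d : nat) (D : set 'cV[R]_d) : Prop :=
  forall x y (t : R), D x -> D y -> 0 <= t -> t <= 1 ->
    D (t *: x + (1 - t) *: y).

Definition betabar {R : realType} (f : R -> R) (C l u : R) : R :=
  inf [set f x | x in [set x : R | `|x| <= Num.max (2 * C) (Num.max (C + l) (C - u))]].

(* bar psi_k, where the conditional expectation E_k sgn[y_{k+1} - S_k(phi^T thetabar)]
   is written as the integral against the conditional density f of eps_{k+1}
   given F_k, with a = phi_k^T theta and b = phi_k^T thetabar_k (F_k-measurable). *)
Definition psibar {R : realType} (f F : R -> R) (L l u U a b : R) : R :=
  fine (\int[lebesgue_measure]_x
          ((Num.sg (sat L l u U (a + x) - sat L l u U b) * f x)%:E))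
  + F (u - b) * ind (sat L l u U b == U)
  - (1 - F (l - b)) * ind (sat L l u U b == L).

(* Main.v *)
Require Import Defs.
From HB Require Import structures.
From mathcomp Require Import all_boot all_order all_algebra.
From mathcomp Require Import all_classical all_reals all_analysis measurable_realfun.
From mathcomp Require Import lra.
Import Order.TTheory GRing.Theory Num.Theory.
Import numFieldNormedType.Exports.
Local Open Scope classical_set_scope.
Local Open Scope ring_scope.

Lemma mfE (R : realType) (f : R -> R) : continuous f ->
  measurable_fun [set: R] (EFin \o f).
Proof. by move=> cf; apply/measurable_EFinP; exact: continuous_measurable_fun. Qed.

Lemma Fsplit (R : realType) (f F : R -> R) : (forall x, 0 <= f x) ->
  lebesgue_measure.-integrable setT (fun x => (f x)%:E) ->
  (forall x, ((F x)%:E = \int[lebesgue_measure]_(t in `]-oo, x]) (f t)%:E)%E) ->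
  forall q p, q <= p ->
  ((F p)%:E = (F q)%:E + \int[lebesgue_measure]_(t in `]q, p]) (f t)%:E)%E.
Proof.
move=> f0 cf hF q p qp.
rewrite !hF (@itv_bndbnd_setU _ _ _ (BRight q)) ?bnd_simp //.
rewrite ge0_integral_setU //.
- case/integrableP: cf => mf _; exact: (measurable_funS measurableT (subsetT _) mf).
- by move=> x _ /=; rewrite lee_fin.
- apply/disj_setPS => x [] /=; rewrite !in_itv /= => xq /andP[qx _].
  by move: (lt_le_trans qx xq); rewrite ltxx.
Qed.

Lemma Iqp (R : realType) (f F : R -> R) : (forall x, 0 <= f x) ->
  lebesgue_measure.-integrable setT (fun x => (f x)%:E) ->
  (forall x, ((F x)%:E = \int[lebesgue_measure]_(t in `]-oo, x]) (f t)%:E)%E) ->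
  forall q p, q <= p ->
  (\int[lebesgue_measure]_(t in `]q, p]) (f t)%:E = (F p - F q)%:E)%E.
Proof.
move=> f0 fi hF q p qp.
by rewrite EFinB (@Fsplit _ _ _ f0 fi hF _ _ qp) [X in _ = (X - _)%E]addeC addeK.
Qed.

Lemma Fge (R : realType) (f F : R -> R) : (forall x, 0 <= f x) ->
  lebesgue_measure.-integrable setT (fun x => (f x)%:E) ->
  (forall x, ((F x)%:E = \int[lebesgue_measure]_(t in `]-oo, x]) (f t)%:E)%E) ->
  forall q p beta, q <= p -> (forall x, q < x -> x <= p -> beta <= f x) ->
  0 <= F p - F q /\ beta * (p - q) <= F p - F q.
Proof.
move=> f0 fi hF q p beta qp hb.
have I0 := @Iqp _ _ _ f0 fi hF _ _ qp.
have mf : measurable_fun `]q, p] (fun x => (f x)%:E).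
  case/integrableP: fi => mf _; exact: (measurable_funS measurableT (subsetT _) mf).
have pos : 0 <= F p - F q.
  rewrite -lee_fin -I0; apply: integral_ge0 => x _; rewrite lee_fin //.
split => //.
have [b0|b0] := leP beta 0.
  apply: le_trans pos; apply: mulr_le0_ge0 => //; lra.
rewrite -lee_fin -I0.
have H : (\int[lebesgue_measure]_(x in `]q, p]) (beta%:E) <=
          \int[lebesgue_measure]_(x in `]q, p]) (f x)%:E)%E.
  apply: ge0_le_integral => //.
  - by move=> x _; rewrite lee_fin ltW.
  - by move=> x /=; rewrite in_itv /= => /andP[qx xp]; rewrite lee_fin hb.
apply: le_trans H.
rewrite integral_cst ?lebesgue_measure_itv //=.
rewrite lebesgue_measure_itv /= lte_fin.
case: ltP => qp'; first by rewrite -EFinB -EFinM.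
have -> : p = q by apply/eqP; rewrite eq_le qp qp'.
by rewrite subrr mulr0 mule0.
Qed.

Ltac mfs fi := let mf_ := fresh in
  case/integrableP: (fi) => mf_ _; exact: (measurable_funS measurableT (subsetT _) mf_).

Lemma Ilow (R : realType) (f F : R -> R) :
  lebesgue_measure.-integrable setT (fun x => (f x)%:E) ->
  (forall x, ((F x)%:E = \int[lebesgue_measure]_(t in `]-oo, x]) (f t)%:E)%E) ->
  forall s, (\int[lebesgue_measure]_(t in `]-oo, s[) (f t)%:E = (F s)%:E)%E.
Proof.
move=> fi hF s; rewrite integral_itv_bndo_bndc ?hF //.
mfs fi.
Qed.

Lemma Iup (R : realType) (f F : R -> R) : (forall x, 0 <= f x) ->
  lebesgue_measure.-integrable setT (fun x => (f x)%:E) ->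
  (forall x, ((F x)%:E = \int[lebesgue_measure]_(t in `]-oo, x]) (f t)%:E)%E) ->
  (\int[lebesgue_measure]_x (f x)%:E = 1)%E ->
  forall s, (\int[lebesgue_measure]_(t in `]s, +oo[) (f t)%:E = (1 - F s)%:E)%E /\
            (\int[lebesgue_measure]_(t in `[s, +oo[) (f t)%:E = (1 - F s)%:E)%E.
Proof.
move=> f0 fi hF h1 s.
have E : (\int[lebesgue_measure]_(t in `]s, +oo[) (f t)%:E = (1 - F s)%:E)%E.
  move: h1; rewrite -set_itvNyy (@itv_bndbnd_setU _ _ _ (BRight s)) ?bnd_simp //.
  rewrite ge0_integral_setU //.
  - rewrite -hF EFinB => <-; by rewrite [X in _ = (X - _)%E]addeC addeK.
  - mfs fi.
  - by move=> x _ /=; rewrite lee_fin.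
  - apply/disj_setPS => x [] /=; rewrite !in_itv /= => xq /andP[qx _].
    by move: (lt_le_trans qx xq); rewrite ltxx.
split => //; rewrite -integral_itv_obnd_cbnd //; mfs fi.
Qed.

Lemma upset (R : realType) (f F : R -> R) : (forall x, 0 <= f x) ->
  lebesgue_measure.-integrable setT (fun x => (f x)%:E) ->
  (forall x, ((F x)%:E = \int[lebesgue_measure]_(t in `]-oo, x]) (f t)%:E)%E) ->
  (\int[lebesgue_measure]_x (f x)%:E = 1)%E ->
  forall (A : set R) c, (forall x, c < x -> A x) -> (forall x, A x -> c <= x) ->
  measurable A /\ (\int[lebesgue_measure]_(x in A) (f x)%:E = (1 - F c)%:E)%E.
Proof.
move=> f0 fi hF h1 A c h2 h3.
have [I1 I2] := @Iup _ _ _ f0 fi hF h1 c.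
have [Ac|Ac] := pselect (A c).
  have -> : A = `[c, +oo[%classic.
    apply/seteqP; split => x /=; rewrite in_itv /= andbT; first exact: h3.
    by rewrite le_eqVlt => /predU1P[<-|]//; exact: h2.
  by split.
have -> : A = `]c, +oo[%classic.
  apply/seteqP; split => x /=; rewrite in_itv /= andbT; last exact: h2.
  move=> Ax; rewrite lt_neqAle h3 // andbT; apply/eqP => cx.
  by apply: Ac; rewrite cx.
by split.
Qed.

Lemma downset (R : realType) (f F : R -> R) :
  lebesgue_measure.-integrable setT (fun x => (f x)%:E) ->
  (forall x, ((F x)%:E = \int[lebesgue_measure]_(t in `]-oo, x]) (f t)%:E)%E) ->
  forall (A : set R) c, (forall x, x < c -> A x) -> (forall x, A x -> x <= c) ->
  measurable A /\ (\int[lebesgue_measure]_(x in A) (f x)%:E = (F c)%:E)%E.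
Proof.
move=> fi hF A c h2 h3.
have I1 := @Ilow _ _ _ fi hF c.
have [Ac|Ac] := pselect (A c).
  have -> : A = `]-oo, c]%classic.
    apply/seteqP; split => x /=; rewrite in_itv /=; first exact: h3.
    by rewrite le_eqVlt => /predU1P[->|]//; exact: h2.
  by split; rewrite -?hF.
have -> : A = `]-oo, c[%classic.
  apply/seteqP; split => x /=; rewrite in_itv /=; last exact: h2.
  move=> Ax; rewrite lt_neqAle h3 // andbT; apply/eqP => cx.
  by apply: Ac; rewrite -cx.
by split.
Qed.

Lemma noset (R : realType) (f : R -> R) (A : set R) : (forall x, ~ A x) ->
  measurable A /\ (\int[lebesgue_measure]_(x in A) (f x)%:E = (0:R)%:E)%E.
Proof.
move=> h; have -> : A = set0 by apply/seteqP; split => x // /h.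
by split => //; rewrite integral_set0.
Qed.

Lemma Isplit (R : realType) (f : R -> R) :
  lebesgue_measure.-integrable setT (fun x => (f x)%:E) ->
  forall (h : R -> R) (s vA vB : R),
  measurable [set x | (s < h x)%R] /\
    (\int[lebesgue_measure]_(x in [set x | (s < h x)%R]) (f x)%:E = vA%:E)%E ->
  measurable [set x | (h x < s)%R] /\
    (\int[lebesgue_measure]_(x in [set x | (h x < s)%R]) (f x)%:E = vB%:E)%E ->
  fine (\int[lebesgue_measure]_x ((Num.sg (h x - s) * f x)%:E)) = vA - vB.
Proof.
move=> fi h s vA vB [mA IA] [mB IB].
set A := [set x | (s < h x)%R] in mA IA.
set B := [set x | (h x < s)%R] in mB IB.
have E : forall x, Num.sg (h x - s) * f x = \1_A x * f x - \1_B x * f x.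
  move=> x; rewrite /indic -mulrBl; congr (_ * _).
  rewrite /A /B.
  case: (ltgtP (h x) s) => H.
  - rewrite ltr0_sg ?subr_lt0 // (mem_set (H : [set x0 | h x0 < s] x)) memNset /=.
      by rewrite sub0r.
    by move=> K; move: (lt_trans H K); rewrite ltxx.
  - rewrite gtr0_sg ?subr_gt0 // (mem_set (H : [set x0 | s < h x0] x)) memNset /=.
      by rewrite subr0.
    by move=> K; move: (lt_trans H K); rewrite ltxx.
  - rewrite H subrr sgr0 !memNset /= ?subrr //; by rewrite H ltxx.
have P : forall (C : set R), measurable C ->
    (\int[lebesgue_measure]_x ((\1_C x * f x)%:E) =
     \int[lebesgue_measure]_(x in C) (f x)%:E)%E /\
    lebesgue_measure.-integrable setT (EFin \o (fun x => \1_C x * f x)).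
  move=> C mC.
  split.
    rewrite [RHS]integral_mkcond; apply: eq_integral => x _.
    by rewrite /patch /indic /=; case: (x \in C); rewrite ?mul1r ?mul0r.
  have mC' : measurable (C : set (g_sigma_algebraType R.-ocitv.-measurable)) := mC.
  have H := (integrable_mkcond _ mC').1 (integrableS measurableT mC' (subsetT _) fi).
  apply: eq_integrable H => //.
  by move=> x _; rewrite /patch /indic /=; case: (x \in C); rewrite ?mul1r ?mul0r.
have [IA' iA] := P A mA.
have [IB' iB] := P B mB.
under eq_integral => x _ do rewrite E EFinB.
rewrite integralB_EFin // IA' IB' IA IB.
by [].
Qed.

Lemma finish (R : realType) (psi k p q a b beta Fp Fq : R) : 1 <= k ->
  psi = k * (Fp - Fq) -> p - q = a - b ->
  beta * `|p - q| <= `|Fp - Fq| /\ 0 <= (p - q) * (Fp - Fq) ->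
  beta * `|a - b| <= `|psi| /\ 0 <= (a - b) * psi.
Proof.
move=> k1 -> pq [h1 h2]; rewrite -pq; split.
  apply: (le_trans h1); rewrite normrM (ger0_norm (le_trans ler01 k1)).
  rewrite -subr_ge0 -{2}(mul1r `|Fp - Fq|) -mulrBl; apply: mulr_ge0 => //.
  by rewrite subr_ge0.
by rewrite mulrCA; apply: mulr_ge0 => //; apply: le_trans k1.
Qed.

Lemma eqbT (R : realType) (x y : R) : x = y -> (x == y) = true.
Proof. by move=> ->; rewrite eqxx. Qed.
Lemma eqbF (R : realType) (x y : R) : x <> y -> (x == y) = false.
Proof. by move=> h; apply/eqP. Qed.

Ltac fixh := repeat match goal with
  | H : (?x < ?y) = false |- _ => move/negbT: H; rewrite -leNgt => H
  | H : (?x < ?y) = true |- _ => move: H => /= H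
  end.

Ltac satt := rewrite /sat; repeat (case: ifP => ?); fixh; intros; fixh; lra.

Ltac finA SA x H := let s1 := fresh in let s2 := fresh in let s3 := fresh in
  let s4 := fresh in let s5 := fresh in let s6 := fresh in
  case: (SA x) => s1 s2 s3 s4 [s5 s6];
  first [ apply: s1; lra | apply: s4; lra | have := s2 H; lra | have := s5 H; lra ].

Ltac finB SB x H := let s1 := fresh in let s2 := fresh in let s3 := fresh in
  let s4 := fresh in
  case: (SB x) => s1 s2 s3 s4;
  first [ apply: s1; lra | apply: s3; lra | have := s2 H; lra | have := s4 H; lra ].

Section SatFacts.
Lemma satA (R : realType) (L l u U y : R) : L <= l -> l <= u -> u <= U -> L < U ->
  [/\ (l < y -> L < sat L l u U y), (L < sat L l u U y -> l <= y),
      (~ sat L l u U y < L), (y < u -> sat L l u U y < U) &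
      ((sat L l u U y < U -> y <= u) /\ (~ U < sat L l u U y))].
Proof. move=> *; split; [satt|satt|satt|satt|split; satt]. Qed.

Lemma satB (R : realType) (L l u U y b : R) : L <= l -> l <= u -> u <= U ->
  l <= b -> b <= u ->
  [/\ (b < y -> b < U -> b < sat L l u U y), (b < sat L l u U y -> b <= y),
      (y < b -> L < b -> sat L l u U y < b) & (sat L l u U y < b -> y <= b)].
Proof. move=> *; split; satt. Qed.
End SatFacts.

Theorem lemma8 (R : realType) (d : nat) (D : set 'cV[R]_d)
    (theta thetabar phi : 'cV[R]_d) (Ck Cbig M L l u U : R) (f F : R -> R) :
  (* A1 *)
  convex_vset D -> compact D -> (interior D) theta ->
  D thetabar ->
  (forall x, D x -> `|dotp phi x| <= Ck) ->
  (* A2 *)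
  L <= l -> l <= u -> u <= U ->
  Num.max l (- u) <= M ->
  ~ (L = l /\ l = u /\ u = U) ->
  (* A3: f is the (continuous) conditional density and F the conditional
     distribution function of eps_{k+1} given F_k *)
  (forall x, 0 <= f x) ->
  continuous f ->
  lebesgue_measure.-integrable setT (fun x => (f x)%:E) ->
  (forall x, ((F x)%:E = \int[lebesgue_measure]_(t in `]-oo, x]) (f t)%:E)%E) ->
  (\int[lebesgue_measure]_x (f x)%:E = 1)%E ->
  F 0 = 2^-1 ->
  Ck <= Cbig ->
  (exists m : R, 0 < m /\ forall x, `|x| <= Num.max (2 * Cbig) (Cbig + M) -> m <= f x) ->
  (exists m : R, forall x, `|x| <= Num.max (2 * Cbig) (Cbig + M) -> f x <= m) ->
  let a := dotp phi theta in
  let b := dotp phi thetabar in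
  let psi := psibar f F L l u U a b in
  `|psi| >= betabar f Ck l u * `|a - b| /\ (a - b) * psi >= 0.
Proof.
move=> _ _ iD Dtb hC hLl hlu huU _ hne f0 _ fi hF h1 F0 _ _ _ a b psi.
have := hC _ (interior_subset iD); rewrite -/a => /ler_normlP [ha1 ha2].
have := hC _ Dtb; rewrite -/b => /ler_normlP [hb1 hb2].
have hLU : L < U.
  rewrite lt_neqAle (le_trans hLl (le_trans hlu huU)) andbT.
  apply/eqP => E; apply: hne; split; [|split]; lra.
set K := Num.max (2 * Ck) (Num.max (Ck + l) (Ck - u)).
have hK1 : 2 * Ck <= K by rewrite /K !le_max lexx.
have hK2 : Ck + l <= K by rewrite /K !le_max lexx !orbT.
have hK3 : Ck - u <= K by rewrite /K !le_max lexx !orbT.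
set beta := betabar f Ck l u.
have hbeta : forall x, - K <= x -> x <= K -> beta <= f x.
  move=> x x1 x2; rewrite /beta /betabar -/K.
  have Hl : has_lbound [set f x0 | x0 in [set x0 | `|x0| <= K]].
    by exists 0 => y [z _ <-].
  apply: (ge_inf Hl); exists x => //=; apply/ler_normlP; split; lra.
clearbody beta K.
have key : forall p q, - K <= p -> p <= K -> - K <= q -> q <= K ->
    beta * `|p - q| <= `|F p - F q| /\ 0 <= (p - q) * (F p - F q).
  move=> p q p1 p2 q1 q2.
  have [qp|pq] := leP q p.
    have [g0 g1] := @Fge _ _ _ f0 fi hF q p beta qp
      (fun x qx xp => hbeta x (ltW (le_lt_trans q1 qx)) (le_trans xp p2)).
    rewrite (ger0_norm g0) ger0_norm ?subr_ge0 //; split => //.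
    by apply: mulr_ge0 => //; rewrite subr_ge0.
  have [g0 g1] := @Fge _ _ _ f0 fi hF p q beta (ltW pq)
    (fun x qx xp => hbeta x (ltW (le_lt_trans p1 qx)) (le_trans xp q2)).
  rewrite (distrC p) (distrC (F p)) (ger0_norm g0) ger0_norm ?subr_ge0 ?(ltW pq) //.
  split => //; rewrite -mulrNN !opprB.
  by apply: mulr_ge0 => //; rewrite subr_ge0 ltW.
rewrite /psi /psibar.
have upA := @upset _ _ _ f0 fi hF h1.
have downB := @downset _ _ _ fi hF.
have SA := fun x => @satA _ L l u U (a + x) hLl hlu huU hLU.
have [bl|lb] := ltP b l.
  have -> : sat L l u U b = L by rewrite /sat bl.
  rewrite (@Isplit _ f fi (fun x => sat L l u U (a + x)) L (1 - F (l - a)) 0); last 2 first.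
  - apply: upA => x /= H; finA SA x H.
  - by apply: noset => x /=; case: (SA x) => _ _ ? _ _.
  rewrite /ind eqxx (lt_eqF hLU).
  apply: (@finish _ _ 1 (l - b) (l - a) a b beta (F (l - b)) (F (l - a))); [lra | rewrite !mulr0 !mulr1 mul1r; lra | lra | apply: key; lra].
have [ub|bu] := ltP u b.
  have -> : sat L l u U b = U.
    by rewrite /sat (_ : (b < l) = false) ?ub //; apply/negbTE; rewrite -leNgt.
  rewrite (@Isplit _ f fi (fun x => sat L l u U (a + x)) U 0 (F (u - a))); last 2 first.
  - by apply: noset => x /=; case: (SA x) => _ _ _ _ [_ ?].
  - apply: downB => x /= H; finA SA x H.
  rewrite /ind eqxx (gt_eqF hLU).
  apply: (@finish _ _ 1 (u - b) (u - a) a b beta (F (u - b)) (F (u - a)));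
    [lra | rewrite !mulr0 !mulr1 mul1r; lra | lra | apply: key; lra].
have -> : sat L l u U b = b.
  rewrite /sat (_ : (b < l) = false); last by apply/negbTE; rewrite -leNgt.
  by rewrite (_ : (u < b) = false) //; apply/negbTE; rewrite -leNgt.
have SB := fun x => @satB _ L l u U (a + x) b hLl hlu huU lb bu.
have [bU|Ub] := ltP b U; have [Lb|bL] := ltP L b.
- rewrite (@Isplit _ f fi (fun x => sat L l u U (a + x)) b (1 - F (b - a)) (F (b - a))); last 2 first.
  + apply: upA => x /= H; finB SB x H.
  + apply: downB => x /= H; finB SB x H.
  rewrite /ind (gt_eqF Lb) (lt_eqF bU).
  apply: (@finish _ _ 2 0 (b - a) a b beta (F 0) (F (b - a)));
    [lra | rewrite !mulr0 F0; lra | lra | apply: key; lra].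
- have bL' : b = L by lra.
  rewrite (@Isplit _ f fi (fun x => sat L l u U (a + x)) b (1 - F (b - a)) 0); last 2 first.
  + apply: upA => x /= H; finB SB x H.
  + by apply: noset => x /=; case: (SA x) => _ _ h _ _; rewrite bL'.
  rewrite /ind (lt_eqF bU) (@eqbT _ _ _ bL').
  have lb' : l = b by lra.
  apply: (@finish _ _ 1 0 (b - a) a b beta (F 0) (F (b - a)));
    [lra | rewrite !mulr0 !mulr1 mul1r lb' subrr; lra | lra | apply: key; lra].
- have bU' : b = U by lra.
  rewrite (@Isplit _ f fi (fun x => sat L l u U (a + x)) b 0 (F (b - a))); last 2 first.
  + by apply: noset => x /=; case: (SA x) => _ _ _ _ [_ h]; rewrite bU'.
  + apply: downB => x /= H; finB SB x H.
  rewrite /ind (gt_eqF Lb) (@eqbT _ _ _ bU').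
  have ub' : u = b by lra.
  apply: (@finish _ _ 1 0 (b - a) a b beta (F 0) (F (b - a)));
    [lra | rewrite !mulr0 !mulr1 mul1r ub' subrr; lra | lra | apply: key; lra].
- exfalso; lra.
Qed.
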